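(* Let $\Gamma\subset\mathbf{Z}^n$ be an almost periodic pattern. Then the mean of $\rho_\Gamma$ equals $D(\Gamma)$: for every $\varepsilon>0$ there exists $R_0>0$ such that for every $R\ge R_0$ and every $x\in\mathbf{R}^n$, $\left|D(\Gamma)-\frac{1}{\operatorname{Card}[B(x,R)]}\sum_{v\in[B(x,R)]}\rho_\Gamma(v)\right|<\varepsilon.$
   Context: Balls are for the sup norm: $B(x,R)=\{y:\max_i|x_i-y_i|<R\}$, $B_R=B(0,R)$, $[B]=B\cap\mathbf{Z}^n$. Relatively dense: there is $R_0>0$ such that every ball of radius at least $R_0$ meets the set; uniformly discrete: there is $r>0$ such that every ball of radius at most $r$ contains at most one point; Delone: both. $D_R^+(\Gamma)=\sup_{x\in\mathbf{R}^n}\frac{\operatorname{Card}(B(x,R)\cap\Gamma)}{\operatorname{Card}(B(x,R)\cap\mathbf{Z}^n)}$. A Delone set $\Gamma\subset\mathbf{Z}^n$ is an almost periodic pattern if for every $\varepsilon>0$ there exist $R_\varepsilon>0$ and a relatively dense set $\mathcal N_\varepsilon$ with $D_R^+((\Gamma+v)\Delta\Gamma)<\varepsilon$ for all $R\ge R_\varepsilon$, $v\in\mathcal N_\varepsilon$. The density of $A\subset\mathbf{Z}^n$ is $D(A)=\lim_{R\to\infty}\operatorname{Card}(A\cap[B_R])/\operatorname{Card}[B_R]$ (the paper uses that these densities exist for the sets considered). For $v\in\mathbf{Z}^n$, $\rho_\Gamma(v)=\frac{D(\Gamma\cap(\Gamma-v))}{D(\Gamma)}$. *)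

(* Defs.v *)
From HB Require Import structures.
From mathcomp Require Import all_boot all_order all_algebra.
From mathcomp Require Import all_classical all_reals all_analysis.
Set Implicit Arguments. Unset Strict Implicit. Unset Printing Implicit Defensive.
Import Order.TTheory GRing.Theory Num.Theory.
Import numFieldNormedType.Exports.
Local Open Scope classical_set_scope.
Local Open Scope ring_scope.

Section AP.
Variables (R : realType) (n : nat).

(* [B(x,r)] = integer points of the open sup-norm ball of center x, radius r *)
Definition ZB (x : 'rV[R]_n) (r : R) : set 'rV[int]_n :=
  [set v | forall i : 'I_n, `|x ord0 i - (v ord0 i)%:~R| < r].

Definition cardZ (A : set 'rV[int]_n) : nat := (\sum_(v \in A) 1)%N.

Definition translate (A : set 'rV[int]_n) (v : 'rV[int]_n) : set 'rV[int]_n :=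
  [set g + v | g in A].

Definition symdiff (A B : set 'rV[int]_n) : set 'rV[int]_n :=
  (A `\` B) `|` (B `\` A).

Definition rel_dense (A : set 'rV[int]_n) : Prop :=
  exists R0 : R, 0 < R0 /\
    forall (x : 'rV[R]_n) (r : R), R0 <= r -> exists v, A v /\ ZB x r v.

Definition unif_discrete (A : set 'rV[int]_n) : Prop :=
  exists r0 : R, 0 < r0 /\
    forall (x : 'rV[R]_n) (r : R), r <= r0 ->
      forall u v, A u -> ZB x r u -> A v -> ZB x r v -> u = v.

Definition Delone (A : set 'rV[int]_n) : Prop := rel_dense A /\ unif_discrete A.

Definition Dplus (A : set 'rV[int]_n) (r : R) : R :=
  sup [set (cardZ (A `&` ZB x r))%:R / (cardZ (ZB x r))%:R | x in [set: 'rV[R]_n]].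

Definition almost_periodic (G : set 'rV[int]_n) : Prop :=
  Delone G /\
  forall eps : R, 0 < eps ->
    exists Reps : R, 0 < Reps /\
    exists N : set 'rV[int]_n, rel_dense N /\
      forall (r : R) (v : 'rV[int]_n), Reps <= r -> N v ->
        Dplus (symdiff (translate G v) G) r < eps.

Definition dens (A : set 'rV[int]_n) : R :=
  lim ((fun r : R => ((cardZ (A `&` ZB 0 r))%:R / (cardZ (ZB 0 r))%:R : R)) @ +oo%R).

Definition rho (G : set 'rV[int]_n) (v : 'rV[int]_n) : R :=
  dens (G `&` translate G (- v)) / dens G.

End AP.

(* Main.v *)
Require Import Defs.
From HB Require Import structures.
From mathcomp Require Import all_boot all_order all_algebra.
From mathcomp Require Import all_classical all_reals all_analysis.
Set Implicit Arguments. Unset Strict Implicit. Unset Printing Implicit Defensive.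
Import Order.TTheory GRing.Theory Num.Theory.
Import numFieldNormedType.Exports.
Local Open Scope classical_set_scope.
Local Open Scope ring_scope.
From mathcomp Require Import zify ring lra.
Section Count.
Variable n : nat.
Local Notation Z := 'rV[int]_n.

Lemma cardZ_ID (A B : set Z) : finite_set A ->
  cardZ A = (cardZ (A `&` B) + cardZ (A `&` ~` B))%N.
Proof. by move=> fA; rewrite /cardZ (fsbigID B). Qed.

Lemma cardZ_le (A B : set Z) : finite_set B -> A `<=` B -> (cardZ A <= cardZ B)%N.
Proof.
move=> fB AB; rewrite (cardZ_ID A fB) (setIidr AB).
exact: leq_addr.
Qed.

Lemma cardZ_setU (A B : set Z) : finite_set A -> finite_set B ->
  (cardZ (A `|` B) <= cardZ A + cardZ B)%N.
Proof.
move=> fA fB; have fU : finite_set (A `|` B) by rewrite finite_setU.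
rewrite (cardZ_ID A fU) leq_add //.
  by apply: cardZ_le => // x [].
by apply: cardZ_le => // x [[]].
Qed.

Lemma cardZ_setD (A B : set Z) : finite_set A -> B `<=` A ->
  cardZ (A `&` ~` B) = (cardZ A - cardZ B)%N.
Proof.
move=> fA BA; rewrite (cardZ_ID B fA) (setIidr BA).
by rewrite addKn.
Qed.

Lemma cardZ_image (A : set Z) (f : Z -> Z) : injective f ->
  cardZ (f @` A) = cardZ A.
Proof.
move=> fi; rewrite /cardZ fsbig_image //.
by move=> x y _ _; apply: fi.
Qed.

Lemma cardZ_translate (A : set Z) w : cardZ (translate A w) = cardZ A.
Proof. by apply: cardZ_image => x y /addIr. Qed.

Lemma fsum_le (R : realType) (P : set Z) (F G : Z -> R) : finite_set P ->
  (forall i, P i -> F i <= G i) -> \sum_(i \in P) F i <= \sum_(i \in P) G i.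
Proof.
move=> fP FG; rewrite !fsbig_finite //= big_seq [X in _ <= X]big_seq.
apply: ler_sum => i; rewrite in_fset_set // inE; exact: FG.
Qed.

Lemma fsum_cst (R : realType) (P : set Z) (c : R) : finite_set P ->
  \sum_(i \in P) c = (cardZ P)%:R * c.
Proof.
move=> fP; rewrite /cardZ !fsbig_finite //= natr_sum mulr_suml.
by apply: eq_bigr => *; rewrite mul1r.
Qed.

Lemma fsum_natr (R : realType) (P : set Z) (F : Z -> nat) : finite_set P ->
  ((\sum_(i \in P) F i)%N)%:R = \sum_(i \in P) ((F i)%:R : R).
Proof. by move=> fP; rewrite !fsbig_finite //= natr_sum. Qed.

Lemma cardZ_ind (P S : set Z) :
  cardZ (P `&` S) = (\sum_(i \in P) (if i \in S then 1 else 0))%N.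
Proof. by rewrite /cardZ fsbig_mkcondr. Qed.

End Count.
From mathcomp Require Import zify.

Section Geom.
Variables (R : realType) (n : nat).
Local Notation Z := 'rV[int]_n.

Definition iv (y : Z) : 'rV[R]_n := \row_i ((y ord0 i)%:~R : R).
Definition Qb (y : Z) (k : nat) : set Z := ZB (iv y) k%:R.

Lemma iv0 : iv 0 = 0.
Proof. by apply/rowP => i; rewrite !mxE. Qed.

Lemma ivD y w : iv (y + w) = iv y + iv w.
Proof. by apply/rowP => i; rewrite !mxE rmorphD. Qed.

Lemma QbP y k w : Qb y k w <-> forall i, `|y ord0 i - w ord0 i| < k%:Z.
Proof.
rewrite /Qb /ZB /iv; split=> H i; have := H i; rewrite mxE -rmorphB /= -intr_norm.
  by rewrite -[k%:R]/((k%:Z)%:~R : R) ltr_int.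
by rewrite -[k%:R]/((k%:Z)%:~R : R) ltr_int.
Qed.

Lemma ZB_translate (x : 'rV[R]_n) r w : ZB (x + iv w) r = translate (ZB x r) w.
Proof.
apply/seteqP; split => v.
  move=> H; exists (v - w); last by rewrite subrK.
  move=> i; have := H i; rewrite !mxE rmorphB /=.
  by rewrite opprB addrA addrAC.
case=> g Hg <- i; have := Hg i; rewrite !mxE rmorphD /=.
by rewrite opprD addrA addrAC addrK.
Qed.

Lemma Qb_translate y k : Qb y k = translate (Qb 0 k) y.
Proof. by rewrite /Qb -ZB_translate iv0 add0r. Qed.

Lemma Qb_sym a k z : Qb a k z <-> Qb z k a.
Proof.
split => /QbP H; apply/QbP => i; by rewrite distrC.
Qed.

Lemma Qb_sub y k K : (k <= K)%N -> Qb y k `<=` Qb y K.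
Proof.
move=> kK w /QbP H; apply/QbP => i; apply: (lt_le_trans (H i)).
by rewrite lez_nat.
Qed.

Lemma Qb_nest y a k K : (k <= K)%N -> Qb y (K - k) a -> Qb a k `<=` Qb y K.
Proof.
move=> kK /QbP Ha z /QbP Hz; apply/QbP => i.
have := Ha i; have := Hz i; have := ler_distD (a ord0 i) (y ord0 i) (z ord0 i).
rewrite -subzn //; lia.
Qed.

Lemma Qb_nest2 y z a k K : Qb y K z -> Qb z k a -> Qb y (K + k) a.
Proof.
move=> /QbP Hz /QbP Ha; apply/QbP => i.
have := Ha i; have := Hz i; have := ler_distD (z ord0 i) (y ord0 i) (a ord0 i).
rewrite PoszD; lia.
Qed.

Definition phi k (f : {ffun 'I_n -> 'I_(2*k).+1}) : Z :=
  \row_i (((f i : nat)%:Z - k%:Z)%R).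

Lemma phi_inj k : injective (@phi k).
Proof.
move=> f g H; apply/ffunP => i; apply/val_inj => /=.
have := congr1 (fun v : Z => v ord0 i) H; rewrite /phi !mxE => /addIr.
by move/eqP; rewrite eqz_nat => /eqP.
Qed.

Lemma Qb0_phi k : Qb 0 k.+1 = (@phi k) @` setT.
Proof.
apply/seteqP; split => w.
  move/QbP => H.
  have Hi : forall i, (absz (w ord0 i + k%:Z)%R < (2*k).+1)%N.
    by move=> i; have := H i; rewrite mxE; lia.
  exists [ffun i => inord (absz (w ord0 i + k%:Z)%R)] => //.
  apply/rowP => i; rewrite /phi !mxE ffunE inordK //.
  have := H i; rewrite mxE => Hw.
  have -> : ((absz (w ord0 i + k%:Z)%R)%:Z = w ord0 i + k%:Z)%R by lia.
  by rewrite addrK.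
case=> f _ <-; apply/QbP => i; rewrite /phi !mxE.
have := ltn_ord (f i); lia.
Qed.

Lemma fsum_finT (T : finType) : (\sum_(x \in [set: T]) 1)%N = #|T|.
Proof.
rewrite -[X in _ = X]sum1_card -big_enum /=.
rewrite (fsbig_seq _ _ (enum_uniq _)); apply: eq_fsbigl.
by apply/seteqP; split => x //= _; rewrite mem_enum.
Qed.

Lemma cardQb y k : cardZ (Qb y k.+1) = ((2*k).+1 ^ n)%N.
Proof.
rewrite Qb_translate cardZ_translate Qb0_phi /cardZ fsbig_image; last first.
  by move=> f g _ _; exact: phi_inj.
by rewrite fsum_finT card_ffun !card_ord.
Qed.

Lemma finQb y k : finite_set (Qb y k).
Proof.
rewrite Qb_translate; apply: finite_image.
apply: (@sub_finite_set _ _ (Qb 0 k.+1)); first exact: Qb_sub.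
rewrite Qb0_phi; apply: finite_image; exact: finite_finset.
Qed.

End Geom.
Section Ratio.
Variables (R : realType) (n : nat).
Local Notation Z := 'rV[int]_n.

Definition qn (k : nat) : nat := @cardZ n (@Qb R n 0 k).

Lemma cardQb_gen (y : Z) k : cardZ (Qb R y k) = qn k.
Proof. by rewrite Qb_translate cardZ_translate. Qed.

Lemma qnS k : qn k.+1 = ((2*k).+1 ^ n)%N.
Proof. exact: cardQb. Qed.

Lemma qn_gt0 k : (0 < qn k.+1)%N.
Proof. by rewrite qnS expn_gt0. Qed.

Lemma qn_mono k K : (k <= K)%N -> (qn k <= qn K)%N.
Proof. by move=> kK; apply: cardZ_le; [exact: finQb | exact: Qb_sub]. Qed.

Lemma pow_1t (t : R) m : 0 <= t -> t <= 1 -> (1 + t) ^+ m <= 1 + t * (2 ^+ m - 1).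
Proof.
move=> t0 t1; elim: m => [|m IH]; first by rewrite !expr0; lra.
have p1 : 1 <= (2 : R) ^+ m by rewrite exprn_ege1 //; lra.
rewrite !exprS.
have h1 : (1 + t) * (1 + t) ^+ m <= (1 + t) * (1 + t * (2 ^+ m - 1)).
  by rewrite ler_pM2l //; lra.
apply: (le_trans h1).
have h2 : 0 <= (t - t * t) * (2 ^+ m - 1) by apply: mulr_ge0; nra.
nra.
Qed.

Lemma ratio s (eta : R) : 0 < eta ->
  exists K : nat, forall k, (K <= k)%N -> (qn (k + s))%:R <= (1 + eta) * (qn k)%:R.
Proof.
move=> eta0.
set x := (2 * s)%:R * 2 ^+ n / eta.
exists (Num.truncn x + 2 * s + 1)%N => k Hk.
case: k Hk => [|j] Hk; first by lia.
rewrite addSn !qnS !natrX.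
set a := ((2 * j).+1)%:R : R; set b := (2 * s)%:R : R.
have -> : (((2 * (j + s)).+1)%:R : R) = a + b.
  by rewrite /a /b -natrD; congr (_%:R); lia.
have a0 : 0 < a by rewrite /a ltr0n.
have xlt : x < (Num.truncn x).+1%:R by apply: truncnS_gt.
have ha : ((Num.truncn x + 2 * s + 1)%N%:R : R) <= a.
  by rewrite /a ler_nat; lia.
have hb : b <= a.
  by rewrite /a /b ler_nat; lia.
rewrite natrD natrD in ha.
have hx0 : 0 <= x by rewrite /x divr_ge0 // ?mulr_ge0 // ?exprn_ge0 // ltW.
have hab : a + b = a * (1 + b / a) by field; lra.
rewrite hab exprMn mulrC ler_pM2r; last by apply: exprn_gt0.
have b0 : 0 <= b by rewrite /b ler0n.
have t0 : 0 <= b / a by apply: divr_ge0; lra.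
have t1 : b / a <= 1 by rewrite ler_pdivrMr // mul1r.
apply: (le_trans (pow_1t n t0 t1)).
have p1 : 1 <= (2 : R) ^+ n by rewrite exprn_ege1 //; lra.
suff : b / a * 2 ^+ n <= eta.
  rewrite mulrBr mulr1; move: (b / a) (2 ^+ n : R) t0 => u v; lra.
rewrite mulrAC ler_pdivrMr //.
have : x < a by lra.
rewrite /x ltr_pdivrMr //; nra.
Qed.

End Ratio.
Section Osc.
Variables (R : realType) (n : nat).
Local Notation Z := 'rV[int]_n.

Definition APp (A : set Z) : Prop :=
  forall eps : R, 0 < eps ->
    exists Reps : R, 0 < Reps /\
    exists N : set Z, rel_dense R N /\
      forall (r : R) (v : Z), Reps <= r -> N v ->
        Dplus (symdiff (translate A v) A) r < eps.

Lemma ratio_le1 (a b : nat) : (a <= b)%N -> (a%:R / b%:R : R) <= 1.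
Proof.
case: b => [|b] ab; first by rewrite invr0 mulr0 ler01.
by rewrite ler_pdivrMr ?ltr0n // mul1r ler_nat.
Qed.

Lemma cardZ_sub_or (S A : set Z) : (cardZ (S `&` A) <= cardZ A)%N \/ cardZ A = 0%N.
Proof.
case: (pselect (finite_set A)) => fA.
  by left; apply: cardZ_le => //; exact: subIsetr.
right; rewrite /cardZ fsbig_dflt //.
have -> : A `&` (fun=> 1%N) @^-1` [set~ 0%N] = A.
  by apply/seteqP; split => x; [case | move=> Ax; split].
exact: fA.
Qed.

Lemma Dplus_ub (S : set Z) (x : 'rV[R]_n) r :
  (cardZ (S `&` ZB x r))%:R / (cardZ (ZB x r))%:R <= Dplus S r.
Proof.
rewrite /Dplus; apply: sup_upper_bound; last by exists x.
split; first by exists ((cardZ (S `&` ZB x r))%:R / (cardZ (ZB x r))%:R); exists x.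
exists 1 => _ [y _ <-].
case: (cardZ_sub_or S (ZB y r)) => [h|->]; first exact: ratio_le1.
by rewrite invr0 mulr0 ler01.
Qed.

Definition fA (A : set Z) (y : Z) (k : nat) : R := (cardZ (A `&` Qb R y k))%:R.
Definition qr (k : nat) : R := (qn R n k)%:R.

Lemma translateI (A B : set Z) v : translate A v `&` translate B v = translate (A `&` B) v.
Proof.
apply/seteqP; split => x.
  by case=> -[a Aa <-] [b Bb /addIr eab]; exists a => //; split => //; rewrite -eab.
by case=> a [Aa Ba] <-; split; exists a.
Qed.

Lemma Qb_translate2 (y v : Z) k : Qb R (y + v) k = translate (Qb R y k) v.
Proof. by rewrite /Qb ivD ZB_translate. Qed.

Lemma osc (A : set Z) : APp A -> forall eps : R, 0 < eps ->
  exists K : nat, forall k, (K <= k)%N -> forall y z, fA A z k <= fA A y k + eps * qr k.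
Proof.
move=> HA eps e0.
have e2 : 0 < eps / 2 by lra.
have [Reps [Re0 [N [[R0 [R00 HN]] HD]]]] := HA _ e2.
set s := (Num.truncn R0).+1.
have Hs : R0 <= s%:R by apply: ltW; apply: truncnS_gt.
have [K1 HK1] := ratio n s e2.
exists (K1 + s + Num.truncn Reps + 1)%N => k Hk y z.
have [v [Nv Hv]] := HN (iv R (z - y)) s%:R Hs.
have sk : (s <= k)%N by lia.
have sub1 : Qb R z (k - s) `<=` Qb R (y + v) k.
  move=> w Hw.
  have H1 : Qb R (y + v) s z.
    have /QbP Hv' : Qb R (z - y) s v by [].
    apply/QbP => i; have := Hv' i; rewrite !mxE.
    have -> : y ord0 i + v ord0 i - z ord0 i = - (z ord0 i - y ord0 i - v ord0 i) by ring.
    by rewrite normrN.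
  by have := Qb_nest2 H1 Hw; rewrite subnKC.
have fin1 : forall B : set Z, finite_set (B `&` Qb R z (k - s)).
  by move=> B; apply: finite_setIr; exact: finQb.
have h1 : (cardZ (A `&` Qb R z k) <= cardZ (A `&` Qb R z (k - s)) + (qn R n k - qn R n (k - s)))%N.
  have fAk : finite_set (A `&` Qb R z k) by apply: finite_setIr; exact: finQb.
  rewrite (cardZ_ID (Qb R z (k - s)) fAk) leq_add //.
    by apply: cardZ_le => // w [[]].
  rewrite -!(cardQb_gen R z) -cardZ_setD; [|exact: finQb|apply: Qb_sub; lia].
  by apply: cardZ_le => [|w [[]]]; [apply: finite_setIl; exact: finQb|].
have h2 : (cardZ (A `&` Qb R z (k - s)) <= cardZ (A `&` Qb R (y + v) k))%N.
  apply: cardZ_le; first by apply: finite_setIr; exact: finQb.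
  by move=> w [Aw /sub1].
set D := symdiff (translate A v) A.
have h3 : (cardZ (A `&` Qb R (y + v) k) <=
    cardZ (translate A v `&` Qb R (y + v) k) + cardZ (D `&` Qb R (y + v) k))%N.
  have fAk : finite_set (A `&` Qb R (y + v) k) by apply: finite_setIr; exact: finQb.
  rewrite (cardZ_ID (translate A v) fAk) leq_add //.
    apply: cardZ_le => [|w [[]]]; first by apply: finite_setIr; exact: finQb.
    by move=> *; split.
  apply: cardZ_le => [|w [[]]]; first by apply: finite_setIr; exact: finQb.
  by move=> Aw Qw nT; split => //; right.
have h4 : cardZ (translate A v `&` Qb R (y + v) k) = cardZ (A `&` Qb R y k).
  by rewrite Qb_translate2 translateI cardZ_translate.
have k1 : (0 < k)%N by lia.
have qk0 : 0 < qr k by rewrite /qr; case: (k) k1 => // k' _; rewrite ltr0n (qn_gt0 R n).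
have h5 : (cardZ (D `&` Qb R (y + v) k))%:R <= eps / 2 * qr k.
  have hr : Reps <= k%:R.
    have ht : (Num.truncn Reps < k)%N by lia.
    apply: ltW; apply: (lt_le_trans (truncnS_gt Reps)); rewrite ler_nat; exact: ht.
  have := Dplus_ub D (iv R (y + v)) k%:R.
  have := HD _ _ hr Nv.
  rewrite -/D -/(Qb R (y + v) k) cardQb_gen -/(qr k) => hlt hle.
  rewrite -ler_pdivrMr //; apply: ltW; exact: le_lt_trans hle hlt.
have h6 : ((qn R n k - qn R n (k - s))%N)%:R <= eps / 2 * qr k.
  have mono := qn_mono R n (leq_subr s k).
  rewrite natrB // -/(qr k).
  have := HK1 (k - s)%N ltac:(lia); rewrite subnK //.
  rewrite -/(qr k) -/(qr (k - s)).
  have : qr (k - s) <= qr k by rewrite /qr ler_nat.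
  have : 0 <= qr (k - s) by rewrite /qr ler0n.
  move=> ? ? ?; nra.
rewrite /fA.
have := leq_trans h1 (leq_add (leq_trans h2 h3) (leqnn _)).
rewrite h4 -(ler_nat R) !natrD => H.
move: H h5 h6; rewrite -/(fA A y k) -/(fA A z k).
move: (fA A y k) (fA A z k) => a b; lra.
Qed.

End Osc.
Section Avg.
Variables (R : realType) (n : nat).
Local Notation Z := 'rV[int]_n.

Lemma fsum_leq (P : set Z) (F G : Z -> nat) : finite_set P ->
  (forall i, P i -> (F i <= G i)%N) -> (\sum_(i \in P) F i <= \sum_(i \in P) G i)%N.
Proof.
move=> fP FG; rewrite !fsbig_finite //= big_seq [X in (_ <= X)%N]big_seq.
apply: leq_sum => i; rewrite in_fset_set // inE; exact: FG.
Qed.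

Lemma fsum_mulnl (P : set Z) c (F : Z -> nat) : finite_set P ->
  (\sum_(i \in P) (c * F i))%N = (c * \sum_(i \in P) F i)%N.
Proof. by move=> fP; rewrite !fsbig_finite //= big_distrr. Qed.

Lemma avg (A : set Z) (y : Z) k K : (k <= K)%N ->
  (qn R n k * cardZ (A `&` Qb R y (K - k)) <= \sum_(z \in Qb R y K) cardZ (A `&` Qb R z k))%N /\
  (\sum_(z \in Qb R y K) cardZ (A `&` Qb R z k) <= qn R n k * cardZ (A `&` Qb R y (K + k)))%N.
Proof.
move=> kK.
set P := Qb R y K; set Big := Qb R y (K + k).
have fP : finite_set P by exact: finQb.
have fB : finite_set Big by exact: finQb.
have E : (\sum_(z \in P) cardZ (A `&` Qb R z k) =
    \sum_(a \in Big) (if a \in A then cardZ (P `&` Qb R a k) else 0))%N.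
  transitivity (\sum_(z \in P) \sum_(a \in Big)
      (if a \in A `&` Qb R z k then 1 else 0))%N.
    apply: eq_fsbigr => z /set_mem Pz; rewrite -cardZ_ind.
    congr cardZ; apply/seteqP; split => a; last by case.
    move=> Ha; split => //; case: Ha => _ Ha; exact: Qb_nest2 Pz Ha.
  rewrite exchange_fsbig //; apply: eq_fsbigr => a _.
  case: (boolP (a \in A)) => Aa.
    rewrite cardZ_ind; apply: eq_fsbigr => z _.
    rewrite in_setI Aa /=.
    have -> : (a \in Qb R z k) = (z \in Qb R a k).
      by apply/idP/idP => /set_mem H; apply/mem_set; apply/Qb_sym.
    by [].
  by rewrite fsbig1 // => z _; rewrite in_setI (negbTE Aa).
rewrite E; split.
  have sub2 : A `&` Qb R y (K - k) `<=` Big.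
    by move=> a [_ Ha]; apply: (Qb_sub (k:=K - k)) => //; lia.
  rewrite -(setIidr sub2) cardZ_ind -fsum_mulnl //.
  apply: fsum_leq => // a _.
  case: (boolP (a \in A `&` Qb R y (K - k))) => Ha; last by rewrite muln0.
  rewrite muln1; move: Ha; rewrite in_setI => /andP[-> /set_mem Hq].
  have -> : P `&` Qb R a k = Qb R a k.
    by apply/setIidr; apply: Qb_nest.
  by rewrite cardQb_gen.
have -> : A `&` Qb R y (K + k) = Big `&` A by rewrite setIC.
rewrite cardZ_ind -fsum_mulnl //.
apply: fsum_leq => // a _.
case: (boolP (a \in A)) => Ha; last by rewrite muln0.
rewrite muln1 -(cardQb_gen R a k); apply: cardZ_le; first exact: finQb.
exact: subIsetr.
Qed.

End Avg.
Section Core.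
Variables (R : realType) (n : nat).
Local Notation Z := 'rV[int]_n.
Local Notation fA := (@fA R n).
Local Notation qr := (@qr R n).

Lemma qr_gt0 k : (0 < k)%N -> 0 < qr k.
Proof. by case: k => // k _; rewrite /qr ltr0n (qn_gt0 R n). Qed.

Lemma qr_mono k K : (k <= K)%N -> qr k <= qr K.
Proof. by move=> kK; rewrite /qr ler_nat; apply: qn_mono. Qed.

Lemma fA_ge0 A y k : 0 <= fA A y k.
Proof. by rewrite /fA ler0n. Qed.

Lemma fA_le A y k : fA A y k <= qr k.
Proof.
rewrite /fA /qr ler_nat -(cardQb_gen R y); apply: cardZ_le; first exact: finQb.
exact: subIsetr.
Qed.

Lemma sum_fA (A : set Z) y K :
  ((\sum_(z \in Qb R y K) cardZ (A `&` Qb R z K))%N)%:R = \sum_(z \in Qb R y K) fA A z K.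
Proof. by rewrite fsum_natr //; exact: finQb. Qed.

Lemma step2 (A : set Z) eps K0 :
  (forall k, (K0 <= k)%N -> forall y z, fA A z k <= fA A y k + eps * qr k) ->
  forall k K y, (K0 <= k)%N -> (0 < k)%N ->
   fA A y K <= qr (K + k) * (fA A 0 k / qr k + eps) /\
   ((k + k <= K)%N -> qr (K - k) * (fA A 0 k / qr k - eps) <= fA A y K).
Proof.
move=> Hosc k K y k0 kpos.
have qk := qr_gt0 kpos.
split.
  have [H _] := avg R A y (leq_addl K k).
  rewrite addnK in H.
  have H' : qr k * fA A y K <= \sum_(z \in Qb R y (K + k)) fA A z k.
    rewrite -fsum_natr; last exact: finQb.
    by rewrite /qr /fA -natrM ler_nat.
  have H2 : \sum_(z \in Qb R y (K + k)) fA A z k <=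
            \sum_(z \in Qb R y (K + k)) (fA A 0 k + eps * qr k).
    apply: fsum_le; first exact: finQb.
    by move=> z _; apply: Hosc.
  rewrite fsum_cst in H2; last exact: finQb.
  rewrite cardQb_gen -/(qr (K + k)) in H2.
  have H3 := le_trans H' H2.
  rewrite -(ler_pM2l qk) mulrCA; apply: (le_trans H3).
  have -> : qr k * (fA A 0 k / qr k + eps) = fA A 0 k + eps * qr k.
    by field; apply: lt0r_neq0.
  by [].
move=> kK.
have kK' : (k <= K - k)%N by lia.
have [_ H] := avg R A y kK'.
rewrite subnK in H; last by lia.
have H' : \sum_(z \in Qb R y (K - k)) fA A z k <= qr k * fA A y K.
  rewrite -fsum_natr; last exact: finQb.
  by rewrite /qr /fA -natrM ler_nat.
have H2 : \sum_(z \in Qb R y (K - k)) (fA A 0 k - eps * qr k) <=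
          \sum_(z \in Qb R y (K - k)) fA A z k.
  apply: fsum_le; first exact: finQb.
  by move=> z _; have := Hosc k k0 z 0; lra.
rewrite fsum_cst in H2; last exact: finQb.
rewrite cardQb_gen -/(qr (K - k)) in H2.
have H3 := le_trans H2 H'.
rewrite -(ler_pM2l qk) mulrCA; apply: (le_trans _ H3).
have -> : qr k * (fA A 0 k / qr k - eps) = fA A 0 k - eps * qr k.
  by field; apply: lt0r_neq0.
by [].
Qed.

Definition aseq (A : set Z) (k : nat) : R := fA A 0 k / qr k.

Lemma aseq_ge0 A k : 0 <= aseq A k.
Proof. by rewrite /aseq divr_ge0 // ?fA_ge0 // /qr ler0n. Qed.

Lemma aseq_le1 A k : aseq A k <= 1.
Proof. by rewrite /aseq /fA /qr; apply: ratio_le1; rewrite -(cardQb_gen R 0); apply: cardZ_le; [exact: finQb|exact: subIsetr]. Qed.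

Lemma step3 (A : set Z) : APp R A -> forall eps : R, 0 < eps -> eps <= 1 ->
  exists k0 M : nat, forall K y, (M <= K)%N ->
    `| fA A y K - aseq A k0 * qr K | <= 3 * eps * qr K.
Proof.
move=> HA eps e0 e1.
have [K0 HK0] := osc HA e0.
set k0 := K0.+1.
have [K1 HK1] := ratio n k0 e0.
exists k0, (K1 + 2 * k0)%N => K y HK.
have Kk : (k0 + k0 <= K)%N by lia.
have Kpos : (0 < K)%N by lia.
have [Hu Hl] := step2 HK0 K y (leqnSn K0) (ltn0Sn K0).
have Hl' := Hl Kk.
have r1 : qr (K + k0) <= (1 + eps) * qr K by rewrite /qr; apply: HK1; lia.
have r2 : qr K <= (1 + eps) * qr (K - k0).
  by have := HK1 (K - k0)%N ltac:(lia); rewrite subnK; last lia.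
rewrite -/(aseq A k0) in Hu Hl'.
have a0 := aseq_ge0 A k0; have a1 := aseq_le1 A k0.
have qK := qr_gt0 Kpos.
have qK' : 0 <= qr (K - k0) by rewrite /qr ler0n.
have f0 := fA_ge0 A y K.
clear Hl; move: Hu Hl' r1 r2 a0 a1 qK qK' f0.
move: (aseq A k0) (qr K) (qr (K + k0)) (qr (K - k0)) (fA A y K) => a q qp qm f.
move=> Hu Hl r1 r2 a0 a1 qK qK' f0.
rewrite ler_norml; apply/andP; split.
  case: (lerP (a - eps) 0) => ha.
    have : a * q <= eps * q by rewrite ler_pM2r //; lra.
    have : 0 <= eps * q by apply: mulr_ge0; lra.
    lra.
  have h1 : (1 - eps) * q <= qm.
    have : (1 - eps) * q <= (1 - eps) * ((1 + eps) * qm).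
      by rewrite ler_wpM2l //; lra.
    have : 0 <= eps * eps * qm by rewrite mulr_ge0 // mulr_ge0 //; lra.
    nra.
  have h2 : (1 - eps) * q * (a - eps) <= qm * (a - eps).
    by rewrite ler_wpM2r //; lra.
  have h3 : 0 <= q * (eps - eps * a + eps * eps).
    by rewrite mulr_ge0 //; [lra | nra].
  have : - (3 * eps * q) <= (1 - eps) * q * (a - eps) - a * q by nra.
  lra.
have h1 : qp * (a + eps) <= (1 + eps) * q * (a + eps) by rewrite ler_wpM2r //; lra.
have h3 : 0 <= q * (eps - eps * a - eps * eps) + q * eps.
  have : 0 <= q * eps by rewrite mulr_ge0 //; lra.
  have : 0 <= q * (eps - eps * a) by rewrite mulr_ge0 //; nra.
  have : q * (eps * eps) <= q * eps by rewrite ler_pM2l //; nra.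
  nra.
have : (1 + eps) * q * (a + eps) - a * q <= 3 * eps * q by nra.
lra.
Qed.

End Core.
Section Core2.
Variables (R : realType) (n : nat).
Local Notation Z := 'rV[int]_n.
Local Notation fA := (@fA R n).
Local Notation qr := (@qr R n).
Local Notation aseq := (@aseq R n).


Lemma core (A : set Z) : APp R A -> exists d : R, 0 <= d /\ d <= 1 /\
  forall eps : R, 0 < eps -> exists M : nat, forall K y, (M <= K)%N ->
    `| fA A y K - d * qr K | <= eps * qr K.
Proof.
move=> HA.
set E := [set t : R | exists M : nat, forall k, (M <= k)%N -> t <= aseq A k].
have E0 : E 0 by exists 0%N => k _; exact: aseq_ge0.
have Eub : ubound E 1.
  by move=> t [M HM]; apply: (le_trans (HM M (leqnn M))); exact: aseq_le1.
have hs : has_sup E by split; [exists 0 | exists 1].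
exists (sup E); split; first exact: sup_upper_bound hs _ E0.
split; first by apply: ge_sup => //; exists 0.
move=> eps e0.
set e := Num.min (eps / 6) 1.
have e0' : 0 < e by rewrite /e lt_min ltr01 andbT; lra.
have e1 : e <= 1 by rewrite /e ge_min lexx orbT.
have e6 : e <= eps / 6 by rewrite /e ge_min lexx.
have [k0 [M HM]] := step3 HA e0' e1.
set M' := maxn M 1.
have Ha : forall K, (M' <= K)%N -> `|aseq A K - aseq A k0| <= 3 * e.
  move=> K HK.
  have Kp : (0 < K)%N by lia.
  have qK := qr_gt0 R n Kp.
  have := HM K 0 ltac:(lia).
  have -> : fA A 0 K = aseq A K * qr K.
    by rewrite /aseq mulfVK //; apply: lt0r_neq0.
  by rewrite -mulrBl normrM (gtr0_norm qK) ler_pM2r.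
have lo : aseq A k0 - 3 * e <= sup E.
  apply: sup_upper_bound => //; exists M' => k Hk.
  have := Ha k Hk; rewrite ler_norml => /andP[h _]; lra.
have hi : sup E <= aseq A k0 + 3 * e.
  apply: ge_sup; first by exists 0.
  move=> t [Mt HMt].
  have := HMt (maxn Mt M') (leq_maxl _ _).
  have := Ha (maxn Mt M') (leq_maxr _ _).
  rewrite ler_norml => /andP[_ h]; lra.
exists M' => K y HK.
have Kp : (0 < K)%N by lia.
have qK := qr_gt0 R n Kp.
have := HM K y ltac:(lia).
move: lo hi; move: (sup E) (aseq A k0) (fA A y K) (qr K) qK => s a f q qK lo hi.
rewrite !ler_norml => /andP[h1 h2]; apply/andP; split.
  have : (a - s) * q <= 3 * e * q by rewrite ler_pM2r //; lra.
  nra.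
have : (s - a) * q <= 3 * e * q by rewrite ler_pM2r //; lra.
have : e * q <= eps / 6 * q by rewrite ler_pM2r.
nra.
Qed.

End Core2.
Section Real.
Variables (R : realType) (n : nat).
Local Notation Z := 'rV[int]_n.
Local Notation fA := (@fA R n).
Local Notation qr := (@qr R n).

Definition fl (x : 'rV[R]_n) : Z := \row_i (Num.floor (x ord0 i)).

Lemma fl_dist (x : 'rV[R]_n) i : `|((fl x) ord0 i)%:~R - x ord0 i| < 1.
Proof.
rewrite /fl mxE; have /andP[h1 h2] := floor_itv (x ord0 i).
rewrite rmorphD /= in h2.
rewrite distrC ger0_norm; lra.
Qed.

Lemma sand_out (x : 'rV[R]_n) r : 0 <= r -> ZB x r `<=` Qb R (fl x) (Num.truncn r).+2.
Proof.
move=> r0 w Hw; apply/QbP => i.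
rewrite -(ltr_int R) intr_norm rmorphB /=.
have h := Hw i; have hf := fl_dist x i.
have hd := ler_distD (x ord0 i) ((fl x) ord0 i)%:~R (w ord0 i)%:~R.
have ht := truncnS_gt r.
rewrite -[(_ .+2)%:Z%:~R]/((Num.truncn r).+2%:R) mulrSr.
move: h hf hd ht; move: (`|_ - _|) (`|_ - _|) (`|_ - _|) => p q s; lra.
Qed.

Lemma sand_in (x : 'rV[R]_n) r : 0 <= r -> Qb R (fl x) (Num.truncn r).-1 `<=` ZB x r.
Proof.
move=> r0 w /QbP Hw i.
have h := Hw i; rewrite -(ltr_int R) intr_norm rmorphB /= in h.
have hf := fl_dist x i.
have hd := ler_distD ((fl x) ord0 i)%:~R (x ord0 i) (w ord0 i)%:~R.
have ht : (Num.truncn r)%:R <= r by rewrite truncn_le.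
move: h ht; case: (Num.truncn r) => [|j] /=.
  move=> h _; have := le_lt_trans (normr_ge0 _) h.
  by rewrite -[((0%N)%:Z)%:~R]/(0 : R) ltxx.
rewrite -[(j%:Z)%:~R]/(j%:R) => h; rewrite mulrSr => ht.
rewrite distrC in hf.
move: h hf hd ht; move: (`|_ - _|) (`|_ - _|) (`|_ - _|) => p q s; lra.
Qed.

Lemma finZB (x : 'rV[R]_n) r : 0 <= r -> finite_set (ZB x r).
Proof.
move=> r0; apply: (@sub_finite_set _ _ (Qb R (fl x) (Num.truncn r).+2)).
  exact: sand_out.
exact: finQb.
Qed.

Lemma real_unif (A : set Z) : APp R A -> exists d : R, 0 <= d /\ d <= 1 /\
  forall eps : R, 0 < eps -> exists R1 : R, 0 < R1 /\ forall (r : R) (x : 'rV[R]_n), R1 <= r ->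
    (0 < cardZ (ZB x r))%N /\
    `| (cardZ (A `&` ZB x r))%:R - d * (cardZ (ZB x r))%:R | <= eps * (cardZ (ZB x r))%:R.
Proof.
move=> HA; have [d [d0 [d1 Hd]]] := core HA.
exists d; split => //; split => // eps e0.
set e := Num.min (eps / 3) 1.
have e0' : 0 < e by rewrite /e lt_min ltr01 andbT; lra.
have e1 : e <= 1 by rewrite /e ge_min lexx orbT.
have e3 : e <= eps / 3 by rewrite /e ge_min lexx.
have [M HM] := Hd e e0'.
have [K1 HK1] := ratio n 3 e0'.
exists (M + K1 + 3)%N%:R; split; first by rewrite ltr0n; lia.
move=> r x hr.
have r0 : 0 <= r by apply: le_trans hr; exact: ler0n.
set k := Num.truncn r.
have hk : (M + K1 + 2 < k)%N.
  by rewrite /k truncn_gt_nat; apply: le_trans hr; rewrite ler_nat; lia.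
set y := fl x.
have so := sand_out (x:=x) r0; have si := sand_in (x:=x) r0.
have fZ := finZB x r0.
have hc1 : (qn R n k.-1 <= cardZ (ZB x r))%N.
  by rewrite -(cardQb_gen R y); apply: cardZ_le.
have hc2 : (cardZ (ZB x r) <= qn R n k.+2)%N.
  by rewrite -(cardQb_gen R y); apply: cardZ_le => //; exact: finQb.
have hf1 : (cardZ (A `&` Qb R y k.-1) <= cardZ (A `&` ZB x r))%N.
  by apply: cardZ_le; [exact: finite_setIr | move=> w [? /si]].
have hf2 : (cardZ (A `&` ZB x r) <= cardZ (A `&` Qb R y k.+2))%N.
  by apply: cardZ_le; [apply: finite_setIr; exact: finQb | move=> w [? /so]].
have lo0 : (0 < qn R n k.-1)%N.
  have -> : k.-1 = (k.-2).+1 by lia.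
  exact: qn_gt0.
split; first by apply: leq_trans lo0 hc1.
have rat : qr k.+2 <= (1 + e) * qr k.-1.
  have := HK1 k.-1 ltac:(lia); rewrite /qr.
  by have -> : (k.-1 + 3 = k.+2)%N by lia.
have H1 := HM k.-1 y ltac:(lia).
have H2 := HM k.+2 y ltac:(lia).
rewrite -(ler_nat R) in hc1; rewrite -(ler_nat R) in hc2.
rewrite -(ler_nat R) in hf1; rewrite -(ler_nat R) in hf2.
rewrite -(ltr_nat R) in lo0.
move: H1 H2 hc1 hc2 hf1 hf2 lo0 rat; rewrite /fA /qr.
set lo := (qn R n k.-1)%:R : R; set hi := (qn R n k.+2)%:R : R.
set c := (cardZ (ZB x r))%:R : R; set f := (cardZ (A `&` ZB x r))%:R : R.
set g1 := (cardZ (A `&` Qb R y k.-1))%:R : R; set g2 := (cardZ (A `&` Qb R y k.+2))%:R : R.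
clearbody lo hi c f g1 g2.
rewrite !ler_norml => /andP[H1a H1b] /andP[H2a H2b] hc1 hc2 hf1 hf2 lo0 rat.
have p1 : d * (hi - lo) <= d * (e * lo) by apply: ler_wpM2l => //; lra.
have elo : 0 <= e * lo by apply: ltW; apply: mulr_gt0.
have p1' : d * (e * lo) <= e * lo.
  have := @mulr_ge0 _ (1 - d) (e * lo) ltac:(lra) elo; rewrite mulrBl mul1r; lra.
have p2 : e * hi <= e * ((1 + e) * lo) by apply: ler_wpM2l => //; lra.
have p3 : e * (e * lo) <= e * lo.
  have := @mulr_ge0 _ (1 - e) (e * lo) ltac:(lra) elo; rewrite mulrBl mul1r; lra.
have p4 : d * lo <= d * c by apply: ler_wpM2l.
have p4' : d * c <= d * hi by apply: ler_wpM2l.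
have p5 : eps * lo <= eps * c by apply: ler_wpM2l => //; lra.
have p6 : e * lo <= eps / 3 * lo by apply: ler_wpM2r => //; lra.
have p7 : 0 <= d * (e * lo) by rewrite mulr_ge0 // mulr_ge0 //; lra.
apply/andP; split.
  move: p1 p1' p2 p3 p4 p4' p5 p6 p7.
  rewrite ?mulrDr ?mulrDl ?mulrBr ?mul1r; lra.
move: p1 p1' p2 p3 p4 p4' p5 p6 p7.
rewrite ?mulrDr ?mulrDl ?mulrBr ?mul1r; lra.
Qed.

Lemma dens_eq (A : set Z) (d : R) :
  (forall eps : R, 0 < eps -> exists R1 : R, 0 < R1 /\ forall (r : R) (x : 'rV[R]_n), R1 <= r ->
    (0 < cardZ (ZB x r))%N /\
    `| (cardZ (A `&` ZB x r))%:R - d * (cardZ (ZB x r))%:R | <= eps * (cardZ (ZB x r))%:R) ->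
  dens R A = d.
Proof.
move=> H; rewrite /dens; apply: cvg_lim => //; apply/cvgrPdist_le => eps e0.
have [R1 [R10 HR]] := H eps e0.
exists R1; split; first by rewrite num_real.
move=> r hr; have [c0 h] := HR r 0 (ltW hr).
rewrite -(ltr_nat R) in c0.
have -> : d - (cardZ (A `&` ZB (0 : 'rV[R]_n) r))%:R / (cardZ (ZB (0 : 'rV[R]_n) r))%:R =
  - ((cardZ (A `&` ZB (0 : 'rV[R]_n) r))%:R - d * (cardZ (ZB (0 : 'rV[R]_n) r))%:R) / (cardZ (ZB (0 : 'rV[R]_n) r))%:R.
  by field; apply: lt0r_neq0.
by rewrite normrM normrN normfV (gtr0_norm c0) ler_pdivrMr.
Qed.

End Real.
Section Fin.
Variables (R : realType) (n : nat).
Local Notation Z := 'rV[int]_n.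

Lemma translateE (A : set Z) w : translate A w = [set x | A (x - w)].
Proof.
apply/seteqP; split => x /=; first by case=> g Ag <-; rewrite addrK.
by move=> H; exists (x - w) => //; rewrite subrK.
Qed.

Lemma Dv_sub (G : set Z) v w :
  symdiff (translate (G `&` translate G (- v)) w) (G `&` translate G (- v)) `<=`
  symdiff (translate G w) G `|` translate (symdiff (translate G w) G) (- v).
Proof.
rewrite /symdiff !translateE => u /=; rewrite !opprK.
have e1 : u - w + v = u + v - w by rewrite addrAC.
case=> -[[H1 H2] H3].
  case: (pselect (G u)) => Gu; last by left; left.
  have nG : ~ G (u + v) by move=> Guv; apply: H3.
  by right; left; split => //; rewrite -e1.
case: (pselect (G (u - w))) => Gw; last by left; right.
have nG : ~ G (u - w + v) by move=> h; apply: H3.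
by right; right; split => //; rewrite -e1.
Qed.

Lemma AP_Gv (G : set Z) v : APp R G -> APp R (G `&` translate G (- v)).
Proof.
move=> HA eps e0.
have e2 : 0 < eps / 2 by lra.
have [Reps [Re0 [N [HN HD]]]] := HA _ e2.
exists Reps; split => //; exists N; split => // r w hr Nw.
have HDw := HD r w hr Nw.
set D := symdiff (translate G w) G in HDw *.
set Dv := symdiff _ _.
have r0 : 0 <= r by apply: (le_trans (ltW Re0)).
have Dge0 : 0 <= Dplus D r.
  by apply: le_trans (Dplus_ub D (0 : 'rV[R]_n) r); rewrite divr_ge0.
apply: (@le_lt_trans _ _ (Dplus D r + Dplus D r)); last by lra.
apply: ge_sup.
  exists ((cardZ (Dv `&` ZB (0 : 'rV[R]_n) r))%:R / (cardZ (ZB (0 : 'rV[R]_n) r))%:R).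
  by exists 0.
move=> _ [x _ <-].
have fB := finZB x r0.
have h1 : (cardZ (Dv `&` ZB x r) <= cardZ (D `&` ZB x r) + cardZ (translate D (- v) `&` ZB x r))%N.
  apply: (@leq_trans (cardZ ((D `|` translate D (- v)) `&` ZB x r))).
    apply: cardZ_le; first by apply: finite_setIr.
    by move=> u [/(@Dv_sub G v w u) h hB]; split.
  by rewrite setIUl; apply: cardZ_setU; apply: finite_setIr.
have h2 : cardZ (translate D (- v) `&` ZB x r) = cardZ (D `&` ZB (x + iv R v) r).
  have -> : ZB x r = translate (ZB (x + iv R v) r) (- v).
    by rewrite -ZB_translate -addrA -ivD subrr iv0 addr0.
  by rewrite translateI cardZ_translate.
have h3 : cardZ (ZB (x + iv R v) r) = cardZ (ZB x r).
  by rewrite ZB_translate cardZ_translate.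
have u1 := Dplus_ub D x r.
have u2 := Dplus_ub D (x + iv R v) r.
rewrite h3 in u2.
rewrite -h2 in u2.
apply: (le_trans _ (lerD u1 u2)).
rewrite -mulrDl ler_wpM2r // ?invr_ge0 // -natrD ler_nat.
exact: h1.
Qed.

Lemma unif_seq (P : Z -> R -> Prop) (l : seq Z) :
  (forall v, exists S : R, forall s, S <= s -> P v s) ->
  exists S : R, forall s, S <= s -> forall v, v \in l -> P v s.
Proof.
move=> H; elim: l => [|a l [S HS]]; first by exists 0.
have [Sa HSa] := H a.
exists (Num.max Sa S) => s hs v; rewrite inE => /orP[/eqP -> | vl].
  by apply: HSa; apply: le_trans hs; rewrite le_max lexx.
by apply: HS => //; apply: le_trans hs; rewrite le_max lexx orbT.
Qed.

Lemma DC (G P : set Z) (x : 'rV[R]_n) r : 0 <= r -> finite_set P ->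
  (\sum_(v \in ZB x r) cardZ ((G `&` translate G (- v)) `&` P) =
   \sum_(y \in G `&` P) cardZ (G `&` ZB (x + iv R y) r))%N.
Proof.
move=> r0 fP.
have fB := finZB x r0.
transitivity (\sum_(v \in ZB x r) \sum_(y \in P)
    (if y \in G `&` translate G (- v) then 1 else 0))%N.
  by apply: eq_fsbigr => v _; rewrite setIC cardZ_ind.
rewrite exchange_fsbig //.
rewrite [G `&` P]setIC fsbig_mkcondr; apply: eq_fsbigr => y _.
case: (boolP (y \in G)) => Gy.
  rewrite -cardZ_ind.
  have -> : G `&` ZB (x + iv R y) r =
      translate (ZB x r `&` [set v | y \in translate G (- v)]) y.
    rewrite ZB_translate -translateI [in LHS]setIC; congr (_ `&` _).
    rewrite !translateE; apply/seteqP; split => u /=.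
    - by move=> Gu; rewrite inE /= translateE /= opprK addrC subrK.
    - by rewrite inE /= translateE /= opprK addrC subrK.
  rewrite cardZ_translate; congr cardZ; congr (_ `&` _).
  apply/seteqP; split => u /=.
  - by case=> _ h; apply: mem_set.
  - by move=> h; split; [exact: set_mem Gy | exact: set_mem h].
by rewrite fsbig1 // => v _; rewrite in_setI (negbTE Gy).
Qed.

End Fin.
Definition unifd (R : realType) (n : nat) (A : set 'rV[int]_n) (d : R) :=
  forall eps : R, 0 < eps -> exists R1 : R, 0 < R1 /\ forall (r : R) (x : 'rV[R]_n), R1 <= r ->
    (0 < cardZ (ZB x r))%N /\
    `| (cardZ (A `&` ZB x r))%:R - d * (cardZ (ZB x r))%:R | <= eps * (cardZ (ZB x r))%:R.

Lemma bound_rho (R : realType) (n : nat) (G : set 'rV[int]_n) (d e : R) (x : 'rV[R]_n) (r : R) :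
  APp R G -> dens R G = d -> 0 <= d -> d <= 1 -> 0 < e -> e <= 1 -> 0 <= r ->
  unifd G d ->
  (forall y, `|(cardZ (G `&` ZB (x + iv R y) r))%:R - d * (cardZ (ZB x r))%:R|
              <= e * (cardZ (ZB x r))%:R) ->
  forall rho : R, 0 < rho ->
  let T := \sum_(v \in ZB x r) dens R (G `&` translate G (- v)) in
  let C := ((cardZ (ZB x r))%:R : R) in
  T <= d ^+ 2 * C + e * d * C + 3 * rho * C /\
  d ^+ 2 * C - e * d * C - 3 * rho * C <= T.
Proof.
move=> HA dG d0 d1 e0 e1 r0 Hd HV rho rho0 T C.
have fB := finZB x r0.
pose P := fun (v : 'rV[int]_n) (s : R) =>
  `|(cardZ ((G `&` translate G (- v)) `&` ZB (0 : 'rV[R]_n) s))%:R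
    - dens R (G `&` translate G (- v)) * (cardZ (ZB (0 : 'rV[R]_n) s))%:R|
  <= rho * (cardZ (ZB (0 : 'rV[R]_n) s))%:R.
have [S1 HS1] : exists S : R, forall s, S <= s -> forall v : 'rV[int]_n, v \in (finmap.enum_fset (fset_set (ZB x r))) -> P v s.
  apply: unif_seq => v.
  have [dv [_ [_ Hdv]]] := real_unif (AP_Gv v HA).
  have dGv := dens_eq Hdv.
  have [S [_ HS]] := Hdv rho rho0.
  exists S => s hs; have [_ h] := HS s 0 hs.
  by rewrite /P dGv.
have [SG [SG0 HSG]] := Hd rho rho0.
set s := Num.max S1 SG.
have hs1 : S1 <= s by rewrite le_max lexx.
have hsG : SG <= s by rewrite le_max lexx orbT.
have s0 : 0 <= s by apply: le_trans hsG; exact: ltW.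
have [c0pos hg] := HSG s 0 hsG.
set c0 := ((cardZ (ZB (0 : 'rV[R]_n) s))%:R : R) in hg.
have c0p : 0 < c0 by rewrite /c0 ltr0n.
set g := ((cardZ (G `&` ZB (0 : 'rV[R]_n) s))%:R : R) in hg.
have fP := finZB (0 : 'rV[R]_n) s0.
set Sf := \sum_(v \in ZB x r) ((cardZ ((G `&` translate G (- v)) `&` ZB (0 : 'rV[R]_n) s))%:R : R).
set SV := \sum_(y \in G `&` ZB (0 : 'rV[R]_n) s) ((cardZ (G `&` ZB (x + iv R y) r))%:R : R).
have eSf : Sf = SV.
  rewrite /Sf /SV -!fsum_natr //; last exact: finite_setIr.
  by rewrite DC.
have fGP : finite_set (G `&` ZB (0 : 'rV[R]_n) s) by exact: finite_setIr.
have V1 : SV <= g * ((d + e) * C).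
  rewrite /g -fsum_cst //; apply: fsum_le => // y _.
  by have := HV y; rewrite ler_norml => /andP[_ h]; rewrite mulrDl; lra.
have V2 : g * ((d - e) * C) <= SV.
  rewrite /g -fsum_cst //; apply: fsum_le => // y _.
  by have := HV y; rewrite ler_norml => /andP[h _]; rewrite mulrBl; lra.
have F1 : Sf <= T * c0 + C * (rho * c0).
  have -> : T * c0 + C * (rho * c0) = \sum_(v \in ZB x r)
      (dens R (G `&` translate G (- v)) * c0 + rho * c0).
    by rewrite fsbig_split // -mulr_fsuml fsum_cst.
  apply: fsum_le => // v Bv.
  have := HS1 s hs1 v; rewrite in_fset_set // inE => /(_ Bv).
  by rewrite /P -/c0 ler_norml => /andP[_ h]; lra.
have F2 : T * c0 - C * (rho * c0) <= Sf.
  have -> : T * c0 - C * (rho * c0) = \sum_(v \in ZB x r)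
      (dens R (G `&` translate G (- v)) * c0 + (- (rho * c0))).
    rewrite fsbig_split // -mulr_fsuml fsum_cst //.
    by rewrite mulrN.
  apply: fsum_le => // v Bv.
  have := HS1 s hs1 v; rewrite in_fset_set // inE => /(_ Bv).
  rewrite /P -/c0 ler_norml => /andP[h _].
  change (dens R (G `&` translate G (- v)) * c0 + - (rho * c0) <= (cardZ ((G `&` translate G (- v)) `&` ZB (0 : 'rV[R]_n) s))%:R); lra.
have C0 : 0 <= C by rewrite /C ler0n.
move: hg; rewrite ler_norml => /andP[hg1 hg2].
have g0 : 0 <= g by rewrite /g ler0n.
clearbody T C c0 g Sf SV.
subst Sf.
split.
  have U2 : g * ((d + e) * C) <= ((d + rho) * c0) * ((d + e) * C).
    by apply: ler_wpM2r; [apply: mulr_ge0 => //; lra | lra].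
  have U3 : T * c0 <= c0 * ((d + rho) * (d + e) * C + C * rho).
    move: F1 V1 U2; move: (g * ((d + e) * C)) => gg; rewrite -!mulrA; nra.
  rewrite [_ * c0]mulrC ler_pM2l // in U3.
  apply: (le_trans U3).
  have : rho * (d + e) * C <= rho * 2 * C.
    by apply: ler_wpM2r => //; apply: ler_wpM2l; lra.
  move=> h; rewrite expr2; nra.
have L1 : d * c0 * (d - e) - rho * c0 <= g * (d - e).
  case: (lerP 0 (d - e)) => hde.
    have : (d * c0 - rho * c0) * (d - e) <= g * (d - e) by apply: ler_wpM2r; lra.
    have : rho * c0 * (d - e) <= rho * c0 * 1.
      by apply: ler_wpM2l; [apply: mulr_ge0; lra | lra].
    nra.
  have : (d * c0 + rho * c0) * (d - e) <= g * (d - e).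
    by apply: ler_wnM2r; lra.
  have : rho * c0 * (-1) <= rho * c0 * (d - e).
    by apply: ler_wpM2l; [apply: mulr_ge0; lra | lra].
  nra.
have L2 : (d * c0 * (d - e) - rho * c0) * C <= g * ((d - e) * C).
  by rewrite mulrA; apply: ler_wpM2r.
have L3 : c0 * (d ^+ 2 * C - e * d * C - 3 * rho * C) <= c0 * T.
  have h0 : 0 <= rho * c0 * C by rewrite mulr_ge0 // mulr_ge0 //; lra.
  move: F1 V2 L2 h0; rewrite expr2; nra.
by rewrite ler_pM2l in L3.
Qed.

Theorem proposition2p8 (R : realType) (n : nat) (G : set 'rV[int]_n) :
  almost_periodic R G ->
  forall eps : R, 0 < eps ->
    exists R0 : R, 0 < R0 /\
      forall (r : R) (x : 'rV[R]_n), R0 <= r ->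
        `| dens R G - (\sum_(v \in ZB x r) rho R G v) / (cardZ (ZB x r))%:R | < eps.
Proof.
move=> [_ HAP] eps e0.
have HA : APp R G := HAP.
have [d [d0 [d1 Hd]]] := real_unif HA.
have dG : dens R G = d := dens_eq Hd.
case: (eqVneq d 0) => [d_0 | dn0].
  exists 1; split => // r x _.
  have -> : \sum_(v \in ZB x r) rho R G v = 0.
    by apply: fsbig1 => v _; rewrite /rho dG d_0 invr0 mulr0.
  by rewrite dG d_0 mul0r subrr normr0.
have dpos : 0 < d by rewrite lt0r dn0 d0.
set e := Num.min (eps / 2) 1.
have e0' : 0 < e by rewrite /e lt_min ltr01 andbT; lra.
have e1 : e <= 1 by rewrite /e ge_min lexx orbT.
have e2 : e <= eps / 2 by rewrite /e ge_min lexx.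
have [R1 [R10 HR1]] := Hd e e0'.
exists R1; split => // r x hr.
have [C0 HC] := HR1 r x hr.
have r0 : 0 <= r by apply: le_trans hr; exact: ltW.
have HV : forall y, `|(cardZ (G `&` ZB (x + iv R y) r))%:R - d * (cardZ (ZB x r))%:R|
              <= e * (cardZ (ZB x r))%:R.
  move=> y; have [_ h] := HR1 r (x + iv R y) hr.
  have hc : cardZ (ZB (x + iv R y) r) = cardZ (ZB x r).
    by rewrite ZB_translate cardZ_translate.
  by rewrite hc in h.
have B := bound_rho HA dG d0 d1 e0' e1 r0 Hd HV.
have sumrho : \sum_(v \in ZB x r) rho R G v =
    (\sum_(v \in ZB x r) dens R (G `&` translate G (- v))) / d.
  by rewrite mulr_fsuml; apply: eq_fsbigr => v _; rewrite /rho dG.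
rewrite sumrho dG.
move: B; set T := \sum_(v \in ZB x r) _; set C := ((cardZ (ZB x r))%:R : R) => B.
have Cp : 0 < C by rewrite /C ltr0n.
have hT : `|T - d ^+ 2 * C| <= e * d * C.
  rewrite ler_norml; apply/andP; split.
    apply/ler_addgt0Pr => del del0.
    have rho0 : 0 < del / (3 * C) by apply: divr_gt0; lra.
    have [_ h] := B _ rho0.
    have : 3 * (del / (3 * C)) * C = del by field; lra.
    lra.
  apply/ler_addgt0Pr => del del0.
  have rho0 : 0 < del / (3 * C) by apply: divr_gt0; lra.
  have [h _] := B _ rho0.
  have : 3 * (del / (3 * C)) * C = del by field; lra.
  lra.
have -> : d - T / d / C = - (T - d ^+ 2 * C) / (d * C).
  by field; apply/andP; split; apply: lt0r_neq0.
rewrite normrM normrN normfV (gtr0_norm (mulr_gt0 dpos Cp)).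
rewrite ltr_pdivrMr ?mulr_gt0 //.
apply: (le_lt_trans hT).
have : 0 < d * C by apply: mulr_gt0.
rewrite -mulrA; move: (d * C) => dc hdc.
have h1 : e * dc <= eps / 2 * dc by apply: ler_wpM2r; lra.
have h2 : eps / 2 * dc < eps * dc by rewrite ltr_pM2r //; lra.
exact: le_lt_trans h1 h2.
Qed.
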